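(* Let $A,B$ be disjoint sets of vertices of a graph $G$ and let $\mathcal{Q}$ be a collection of $k$ pairwise edge-disjoint $AB$-paths. Then the union of the members of $\mathcal{Q}$ contains a collection of $k$ pairwise edge-disjoint $AB$-paths which is aligned.
   Context: All graphs are finite and loopless but may have parallel edges. For disjoint $A,B\subseteq V(G)$, an $AB$-path is a path with one end in $A$ and the other end in $B$; it is written $x_1,x_2,\ldots,x_s$ with $x_1\in A$, $x_s\in B$. Two edge-disjoint $AB$-paths $Q_1=x_1,\ldots,x_s$ and $Q_2=y_1,\ldots,y_t$ which share two internal vertices $u=x_{i_1}=y_{j_1}$ and $v=x_{i_2}=y_{j_2}$ are aligned with respect to $u$ and $v$ if $(i_1-i_2)(j_1-j_2)>0$. Two such paths are aligned if they are aligned with respect to every pair of internal vertices in which they intersect; a collection of paths is aligned if its members are pairwise aligned. *)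

(* Defs.v *)
From mathcomp Require Import all_boot all_order all_algebra.
Set Implicit Arguments. Unset Strict Implicit. Unset Printing Implicit Defensive.
Import Order.TTheory GRing.Theory Num.Theory.

(* A finite loopless multigraph: vertex type V, edge type E (both finite),
   [ends e] = the pair of end vertices of edge e.  Parallel edges are allowed
   (distinct edges may have the same ends). *)
Definition loopless (V E : finType) (ends : E -> V * V) : Prop :=
  forall e : E, (ends e).1 != (ends e).2.

Definition joins (V E : finType) (ends : E -> V * V) (e : E) (x y : V) : bool :=
  (ends e == (x, y)) || (ends e == (y, x)).

(* A walk/path x_1, e_1, x_2, ..., e_{s-1}, x_s is stored as its first vertex
   x_1 and the list of steps (e_i, x_{i+1}). *)
Record gpath (V E : Type) := GPath { gstart : V; gsteps : seq (E * V) }.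

Definition gverts (V E : Type) (P : gpath V E) : seq V :=
  gstart P :: map snd (gsteps P).
Definition gedges (V E : Type) (P : gpath V E) : seq E := map fst (gsteps P).
Definition glast (V E : Type) (P : gpath V E) : V := last (gstart P) (map snd (gsteps P)).

Fixpoint is_walk_from (V E : finType) (ends : E -> V * V) (x : V)
    (s : seq (E * V)) : bool :=
  match s with
  | [::] => true
  | (e, y) :: s' => joins ends e x y && is_walk_from ends y s'
  end.

Definition is_gpath (V E : finType) (ends : E -> V * V) (P : gpath V E) : bool :=
  is_walk_from ends (gstart P) (gsteps P) && uniq (gverts P).

Definition is_ABpath (V E : finType) (ends : E -> V * V) (A B : {set V})
    (P : gpath V E) : bool :=
  [&& is_gpath ends P, gstart P \in A & glast P \in B].

Definition edge_disjoint (V E : finType) (P Q : gpath V E) : bool :=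
  [disjoint gedges P & gedges Q].

Definition pairwise_edge_disjoint (V E : finType) (k : nat)
    (Q : 'I_k -> gpath V E) : Prop :=
  forall i j : 'I_k, i != j -> edge_disjoint (Q i) (Q j).

(* u is an internal vertex of P: u = x_i with 1 < i < s (1-based) *)
Definition internal (V E : finType) (u : V) (P : gpath V E) : bool :=
  [&& u \in gverts P, 0 < index u (gverts P) & index u (gverts P) < (size (gverts P)).-1].

(* Positions are 0-based here; only differences matter. *)
Definition aligned (V E : finType) (P Q : gpath V E) : Prop :=
  forall u v : V, u != v ->
    internal u P -> internal u Q -> internal v P -> internal v Q ->
    (0 < ((index u (gverts P))%:Z - (index v (gverts P))%:Z)
         * ((index u (gverts Q))%:Z - (index v (gverts Q))%:Z))%R.

Definition aligned_family (V E : finType) (k : nat) (Q : 'I_k -> gpath V E) : Prop :=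
  forall i j : 'I_k, i != j -> aligned (Q i) (Q j).

(* Main.v *)
Require Import Defs.
From mathcomp Require Import all_boot all_order all_algebra.
From mathcomp Require Import zify.
From Stdlib Require Import Classical.
Set Implicit Arguments. Unset Strict Implicit. Unset Printing Implicit Defensive.

Lemma walk_cat (V E : finType) (ends : E -> V * V) x s1 s2 :
  is_walk_from ends x (s1 ++ s2) =
  is_walk_from ends x s1 && is_walk_from ends (last x (map snd s1)) s2.
Proof. elim: s1 x => [|[e y] s1 IH] x //=. by rewrite IH andbA. Qed.

Lemma last_take (T : Type) (x : T) l p :
  p <= size l -> last x (take p l) = nth x (x :: l) p.
Proof.
elim: l x p => [|y l IH] x [|p] //= Hp.
rewrite IH // (set_nth_default x) //=.
Qed.

Lemma last_drop (T : Type) (x : T) l p :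
  p <= size l -> last (nth x (x :: l) p) (drop p l) = last x l.
Proof. move=> Hp; by rewrite -[in RHS](cat_take_drop p l) last_cat last_take. Qed.

Lemma walk_split (V E : finType) (ends : E -> V * V) x s p :
  is_walk_from ends x s -> p <= size s ->
  is_walk_from ends x (take p s) /\
  is_walk_from ends (nth x (x :: map snd s) p) (drop p s).
Proof.
move=> W Hp; move: W; rewrite -{1}(cat_take_drop p s) walk_cat => /andP [W1 W2].
split => //. by rewrite map_take last_take ?size_map in W2.
Qed.

Lemma shorten_walk (V E : finType) (ends : E -> V * V) (s : seq (E * V)) (x : V) :
  is_walk_from ends x s -> exists t, [/\ is_walk_from ends x t /\
    uniq (x :: map snd t), last x (map snd t) = last x (map snd s),
    {subset map fst t <= map fst s}, {subset map snd t <= map snd s}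
    & size t <= size s].
Proof.
elim: s x => [|[e y] s IH] x /=.
  by move=> _; exists [::]; split.
case/andP => Hj /IH [t [[Wt Ut] Lt Ft St Zt]].
case: (eqVneq x y) => [Exy|nxy]; first subst y.
  exists t; (split; first split) => //.
  - by move=> z /Ft; rewrite in_cons => ->; rewrite orbT.
  - by move=> z /St; rewrite in_cons => ->; rewrite orbT.
  - lia.
case Hx: (x \in map snd t).
  pose n := index x (map snd t).
  exists (drop n.+1 t).
  have Hn : n < size (map snd t) by rewrite index_mem.
  have Hsplit := cat_take_drop n.+1 t.
  have Hlx : last y (map snd (take n.+1 t)) = x.
    rewrite map_take last_take; last by [].
    by rewrite /= nth_index.
  have : is_walk_from ends y (take n.+1 t ++ drop n.+1 t) by rewrite Hsplit.
  rewrite walk_cat => /andP [_]; rewrite Hlx => Wd.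
  have Ums : uniq (map snd t) by case/andP: Ut.
  have : uniq (map snd (take n.+1 t) ++ map snd (drop n.+1 t)) by rewrite -map_cat Hsplit.
  rewrite cat_uniq => /and3P [_ Hdis Ud].
  have Hin : x \in map snd (take n.+1 t).
    rewrite map_take.
    have -> : x = nth x (take n.+1 (map snd t)) n by rewrite nth_take // nth_index.
    apply: mem_nth; rewrite size_take; case: ifP => //; lia.
  (split; first split) => //.
  - rewrite /= Ud andbT; apply/negP => Hxd.
    by move/hasPn: Hdis => /(_ x Hxd); rewrite Hin.
  - by rewrite -Lt -[in RHS]Hsplit map_cat last_cat Hlx.
  - by move=> z; rewrite map_drop => /mem_drop /Ft; rewrite in_cons => ->; rewrite orbT.
  - by move=> z; rewrite map_drop => /mem_drop /St; rewrite in_cons => ->; rewrite orbT.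
  - rewrite size_drop; lia.
exists ((e, y) :: t); (split; first split) => //=.
- by rewrite Hj Wt.
- by rewrite in_cons negb_or nxy Hx.
- by move=> z; rewrite !in_cons => /orP [->|/Ft ->]; rewrite ?orbT.
- by move=> z; rewrite !in_cons => /orP [->|/St ->]; rewrite ?orbT.
Qed.

Lemma walk_ends (V E : finType) (ends : E -> V * V) x s e :
  is_walk_from ends x s -> e \in map fst s ->
  ((ends e).1 \in x :: map snd s) && ((ends e).2 \in x :: map snd s).
Proof.
elim: s x => [|[e0 y] s IH] x //= /andP [Hj Ws]; rewrite in_cons => /orP [/eqP ->|He].
  by move: Hj; rewrite /joins => /orP [] /eqP -> /=; rewrite !in_cons !eqxx !orbT.
move/andP: (IH _ Ws He) => [H1 H2].
by rewrite (in_cons x) H1 (in_cons x) H2 !orbT.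
Qed.

Lemma path_uniq_edges (V E : finType) (ends : E -> V * V) x s :
  is_walk_from ends x s -> uniq (x :: map snd s) -> uniq (map fst s).
Proof.
elim: s x => [|[e y] s IH] x //= /andP [Hj Ws] /andP [Hx Us].
rewrite (IH _ Ws Us) andbT; apply/negP => He.
move/andP: (walk_ends Ws He) => [H1 H2].
move: Hj; rewrite /joins => /orP [] /eqP Hend; rewrite Hend /= in H1 H2.
  by rewrite H1 in Hx.
by rewrite H2 in Hx.
Qed.

Lemma td (T : eqType) (l : seq T) p q z :
  uniq l -> p <= q -> z \in take p l -> z \in drop q l -> False.
Proof.
move=> U pq Hp Hq.
have Hq' : z \in take q l by move: Hp; rewrite -(take_takel _ pq) => /mem_take.
move: U; rewrite -(cat_take_drop q l) cat_uniq => /and3P [_ Hd _].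
by move/hasPn: Hd => /(_ z Hq); rewrite Hq'.
Qed.

Lemma splice (V E : finType) (ends : E -> V * V) A B (P R : gpath V E) u :
  is_ABpath ends A B P -> is_ABpath ends A B R -> u \in gverts P -> u \in gverts R ->
  exists W : gpath V E, [/\ is_ABpath ends A B W,
    forall e, e \in gedges W -> e \in take (index u (gverts P)) (gedges P) \/
                                e \in drop (index u (gverts R)) (gedges R),
    forall x, x \in gverts W -> x \in gverts P \/ x \in gverts R &
    size (gsteps W) <= index u (gverts P) + (size (gsteps R) - index u (gverts R))].
Proof.
case: P => xp sp; case: R => xr sr.
rewrite /is_ABpath /is_gpath /gverts /gedges /glast /=.
case/and3P => /andP [Wp Up] Ap Bp; case/and3P => /andP [Wr Ur] Ar Br HuP HuR.
have Ha : index u (xp :: map snd sp) <= size sp.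
  by have := HuP; rewrite -index_mem /= size_map ltnS.
have Hd : index u (xr :: map snd sr) <= size sr.
  by have := HuR; rewrite -index_mem /= size_map ltnS.
have Hnu : nth xp (xp :: map snd sp) (index u (xp :: map snd sp)) = u by rewrite nth_index.
have Hnr : nth xr (xr :: map snd sr) (index u (xr :: map snd sr)) = u by rewrite nth_index.
have [Wt _] := walk_split Wp Ha.
have [_ Wd] := walk_split Wr Hd. rewrite Hnr in Wd.
have Wraw : is_walk_from ends xp (take (index u (xp :: map snd sp)) sp ++
                                  drop (index u (xr :: map snd sr)) sr).
  by rewrite walk_cat Wt /= map_take last_take ?size_map // Hnu.
have [t [[W1 U1] L1 F1 S1 Z1]] := shorten_walk Wraw.
exists (GPath xp t); split => /=.
- apply/and3P; split; [by apply/andP; split|done|].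
  rewrite L1 map_cat last_cat map_take last_take ?size_map // Hnu map_drop.
  by rewrite -[X in last X _]Hnr last_drop ?size_map.
- move=> e /F1; rewrite map_cat mem_cat map_take map_drop => /orP [] H; by [left|right].
- move=> x; rewrite in_cons => /orP [/eqP ->|/S1]; first by left; rewrite in_cons eqxx.
  rewrite map_cat mem_cat map_take map_drop => /orP [/mem_take|/mem_drop] H.
    by left; rewrite in_cons H orbT.
  by right; rewrite in_cons H orbT.
- by move: Z1; rewrite size_cat size_takel // size_drop => H; exact H.
Qed.

Definition good (V E : finType) (ends : E -> V * V) A B k (Q : 'I_k -> gpath V E) :=
  (forall i, is_ABpath ends A B (Q i)) /\ pairwise_edge_disjoint Q.

Definition subfam (V E : finType) k (Q' Q : 'I_k -> gpath V E) :=
  (forall i e, e \in gedges (Q' i) -> exists j, e \in gedges (Q j)) /\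
  (forall i x, x \in gverts (Q' i) -> exists j, x \in gverts (Q j)).

Definition meas (V E : finType) k (Q : 'I_k -> gpath V E) :=
  \sum_(l < k) size (gsteps (Q l)).

Lemma sum_two k (F : 'I_k -> nat) i j : i != j ->
  \sum_(l < k) F l = F i + F j + \sum_(l < k | (l != i) && (l != j)) F l.
Proof.
move=> ij; rewrite (bigD1 i) //= (bigD1 j) /= ?addnA //.
by rewrite eq_sym.
Qed.

Lemma idx_le (V E : finType) (P : gpath V E) x :
  x \in gverts P -> index x (gverts P) <= size (gsteps P).
Proof. by rewrite -index_mem /gverts /= size_map ltnS. Qed.

Lemma dis_elim (T : finType) (s1 s2 : seq T) x :
  [disjoint s1 & s2] -> x \in s1 -> x \in s2 -> False.
Proof. by move=> D H1 H2; move: (disjointFr D H1); rewrite H2. Qed.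

Lemma swap (V E : finType) (ends : E -> V * V) A B k (Q : 'I_k -> gpath V E) i j u v :
  good ends A B Q -> i != j ->
  u \in gverts (Q i) -> v \in gverts (Q i) -> u \in gverts (Q j) -> v \in gverts (Q j) ->
  index u (gverts (Q i)) < index v (gverts (Q i)) ->
  index v (gverts (Q j)) < index u (gverts (Q j)) ->
  exists Q2, [/\ good ends A B Q2, subfam Q2 Q & meas Q2 < meas Q].
Proof.
move=> [HQ HQd] ij Hui Hvi Huj Hvj Hab Hcd.
have [W1 [A1 E1 V1 Z1]] := splice (HQ i) (HQ j) Hui Huj.
have [W2 [A2 E2 V2 Z2]] := splice (HQ j) (HQ i) Hvj Hvi.
have ji : j != i by rewrite eq_sym.
pose Q2 := fun l => if l == i then W1 else if l == j then W2 else Q l.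
have Q2i : Q2 i = W1 by rewrite /Q2 eqxx.
have Q2j : Q2 j = W2 by rewrite /Q2 (negbTE ji) eqxx.
have Q2o : forall l, l != i -> l != j -> Q2 l = Q l.
  by move=> l li lj; rewrite /Q2 (negbTE li) (negbTE lj).
have Upath : forall l, uniq (gedges (Q l)).
  move=> l; have := HQ l; rewrite /is_ABpath /is_gpath => /and3P [/andP [W U] _ _].
  exact: path_uniq_edges W U.
have Dis : forall l m e, l != m -> e \in gedges (Q l) -> e \in gedges (Q m) -> False.
  by move=> l m e lm H1 H2; apply: (dis_elim (HQd l m lm) H1 H2).
have DW : forall e, e \in gedges W1 -> e \in gedges W2 -> False.
  move=> e /E1 [H1|H1] /E2 [H2|H2].
  - exact: (Dis i j e ij (mem_take H1) (mem_take H2)).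
  - exact: (td (Upath i) (ltnW Hab) H1 H2).
  - exact: (td (Upath j) (ltnW Hcd) H2 H1).
  - exact: (Dis i j e ij (mem_drop H2) (mem_drop H1)).
have DWo1 : forall l e, l != i -> l != j -> e \in gedges W1 -> e \in gedges (Q l) -> False.
  move=> l e li lj /E1 [H1|H1] H2.
  - by apply: (Dis i l e _ (mem_take H1) H2); rewrite eq_sym.
  - by apply: (Dis j l e _ (mem_drop H1) H2); rewrite eq_sym.
have DWo2 : forall l e, l != i -> l != j -> e \in gedges W2 -> e \in gedges (Q l) -> False.
  move=> l e li lj /E2 [H1|H1] H2.
  - by apply: (Dis j l e _ (mem_take H1) H2); rewrite eq_sym.
  - by apply: (Dis i l e _ (mem_drop H1) H2); rewrite eq_sym.
have key : forall l m e, l != m -> e \in gedges (Q2 l) -> e \in gedges (Q2 m) -> False.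
  move=> l m e lm; case: (eqVneq l i) => [El|li].
    subst l; rewrite Q2i; case: (eqVneq m j) => [Em|mj].
      by subst m; rewrite Q2j; exact: DW.
    have mi : m != i by rewrite eq_sym.
    rewrite (Q2o m mi mj); exact: (DWo1 m e mi mj).
  case: (eqVneq l j) => [El|lj].
    subst l; rewrite Q2j; case: (eqVneq m i) => [Em|mi].
      by subst m; rewrite Q2i => H1 H2; exact: DW H2 H1.
    have mj : m != j by rewrite eq_sym.
    rewrite (Q2o m mi mj); exact: (DWo2 m e mi mj).
  rewrite (Q2o l li lj); case: (eqVneq m i) => [Em|mi].
    by subst m; rewrite Q2i => H1 H2; exact: (DWo1 l e li lj H2 H1).
  case: (eqVneq m j) => [Em|mj].
    by subst m; rewrite Q2j => H1 H2; exact: (DWo2 l e li lj H2 H1).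
  rewrite (Q2o m mi mj); exact: Dis lm.
exists Q2; split.
- split.
    by move=> l; rewrite /Q2; case: ifP => _; [|case: ifP => _].
  move=> l m lm; rewrite /edge_disjoint disjoint_has; apply/hasPn => e H1.
  by apply/negP => H2; apply: (key l m e lm H1 H2).
- split.
    move=> l e; rewrite /Q2; case: ifP => _; [|case: ifP => _]; last by exists l.
    + by move/E1 => [/mem_take H|/mem_drop H]; [exists i|exists j].
    + by move/E2 => [/mem_take H|/mem_drop H]; [exists j|exists i].
  move=> l x; rewrite /Q2; case: ifP => _; [|case: ifP => _]; last by exists l.
  + by move/V1 => [H|H]; [exists i|exists j].
  + by move/V2 => [H|H]; [exists j|exists i].
- rewrite /meas !(sum_two _ ij) Q2i Q2j.
  rewrite (eq_bigr (fun l => size (gsteps (Q l)))); last first.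
    by move=> l /andP [li lj]; rewrite Q2o.
  have Hb := idx_le Hvi; have Hd := idx_le Huj.
  move: Z1 Z2 Hb Hd Hab Hcd.
  move: (size (gsteps W1)) (size (gsteps W2)) (index u (gverts (Q i)))
    (index v (gverts (Q i))) (index v (gverts (Q j))) (index u (gverts (Q j)))
    (size (gsteps (Q i))) (size (gsteps (Q j)))
    (\sum_(l < k | (l != i) && (l != j)) size (gsteps (Q l))).
  clear; move=> *; lia.
Qed.

Definition badpair (V E : finType) k (Q : 'I_k -> gpath V E) :=
  exists i j u v, [/\ i != j, u \in gverts (Q i) /\ v \in gverts (Q i),
    u \in gverts (Q j) /\ v \in gverts (Q j),
    index u (gverts (Q i)) < index v (gverts (Q i)) &
    index v (gverts (Q j)) < index u (gverts (Q j))].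

Lemma idx_neq (V E : finType) (P : gpath V E) u v :
  u != v -> u \in gverts P -> v \in gverts P -> index u (gverts P) != index v (gverts P).
Proof.
move=> uv Hu Hv; apply: contra uv => /eqP H.
have E1 := nth_index u Hu; rewrite H (nth_index u Hv) in E1; by rewrite E1.
Qed.

Lemma noswap_aligned (V E : finType) k (Q : 'I_k -> gpath V E) :
  ~ badpair Q -> aligned_family Q.
Proof.
move=> Hn i j ij u v uv /and3P [Hui _ _] /and3P [Huj _ _] /and3P [Hvi _ _] /and3P [Hvj _ _].
have Hab := idx_neq uv Hui Hvi; have Hcd := idx_neq uv Huj Hvj.
case: (ltngtP (index u (gverts (Q i))) (index v (gverts (Q i)))) => H1;
  last by rewrite H1 eqxx in Hab.
- case: (ltngtP (index u (gverts (Q j))) (index v (gverts (Q j)))) => H2;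
    last by rewrite H2 eqxx in Hcd.
  + move: H1 H2; move: (index u _) (index v _) (index u (gverts (Q j))) (index v (gverts (Q j))).
    clear; move=> a b c d H1 H2; nia.
  + by exfalso; apply: Hn; exists i, j, u, v; split.
- case: (ltngtP (index u (gverts (Q j))) (index v (gverts (Q j)))) => H2;
    last by rewrite H2 eqxx in Hcd.
  + by exfalso; apply: Hn; exists i, j, v, u; split.
  + move: H1 H2; move: (index u _) (index v _) (index u (gverts (Q j))) (index v (gverts (Q j))).
    clear; move=> a b c d H1 H2; nia.
Qed.

Lemma main_ind (V E : finType) (ends : E -> V * V) A B k n :
  forall Q : 'I_k -> gpath V E, meas Q < n -> good ends A B Q ->
  exists Q', [/\ good ends A B Q', subfam Q' Q & aligned_family Q'].
Proof.
elim: n => [|n IH] Q Hm HQ; first by [].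
case: (classic (badpair Q)).
  move=> [i [j [u [v [ij [Hui Hvi] [Huj Hvj] H1 H2]]]]].
  have [Q2 [G2 S2 M2]] := swap HQ ij Hui Hvi Huj Hvj H1 H2.
  have Hm2 : meas Q2 < n by rewrite ltnS in Hm; exact: (leq_trans M2 Hm).
  have [Q' [G' S' A']] := IH Q2 Hm2 G2.
  exists Q'; split => //; split.
    move=> l e /(S'.1 l e) [m /(S2.1 m e)] [p Hp]; by exists p.
  move=> l x /(S'.2 l x) [m /(S2.2 m x)] [p Hp]; by exists p.
move=> Hn; exists Q; split => //; last exact: noswap_aligned.
by split; move=> l ? H; exists l.
Qed.

Theorem lemma7p1 (V E : finType) (ends : E -> V * V) (Hll : loopless ends)
    (A B : {set V}) (HAB : [disjoint A & B])
    (k : nat) (Q : 'I_k -> gpath V E)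
    (HQ : forall i, is_ABpath ends A B (Q i))
    (HQd : pairwise_edge_disjoint Q) :
  exists Q' : 'I_k -> gpath V E,
    [/\ forall i, is_ABpath ends A B (Q' i),
        pairwise_edge_disjoint Q',
        forall i e, e \in gedges (Q' i) -> exists j, e \in gedges (Q j),
        forall i x, x \in gverts (Q' i) -> exists j, x \in gverts (Q j)
      & aligned_family Q'].
Proof.
have [Q' [[G1 G2] [S1 S2] Al]] := main_ind (ltnSn (meas Q)) (conj HQ HQd).
by exists Q'; split.
Qed.
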